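(* For a morphism of presheaves $f:X\to Y$ on $\mathscr{V}_f$, the following are equivalent: (1) $f$ is a monomorphism; (2) for each $n\in\mathbb{N}$, $f$ restricts to an injective map $X_{\mathrm{reg}}(n)\hookrightarrow Y_{\mathrm{reg}}(n)$ (in particular $f(X_{\mathrm{reg}}(n))\subset Y_{\mathrm{reg}}(n)$).
   Context: $p$ prime, $\mathbb{F}=\mathbb{F}_p$, $\mathscr{V}_f$ finite-dimensional $\mathbb{F}$-vector spaces; presheaves are contravariant functors $\mathscr{V}_f\to$ Sets. For a presheaf $X$ and $n\in\mathbb{N}$, $X(\mathbb{F}^n)$ is a right $\mathrm{End}(\mathbb{F}^n)$-set; the rank filtration $X_{\le 0}\subset X_{\le1}\subset\cdots\subset X$ has $X_{\le n}$ the image of the evaluation map $X(\mathbb{F}^n)\times_{\mathrm{End}(\mathbb{F}^n)}\mathrm{Hom}(-,\mathbb{F}^n)\to X$. The set of regular elements is $X_{\mathrm{reg}}(n)=X(\mathbb{F}^n)\setminus X_{\le n-1}(\mathbb{F}^n)$. *)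

(* Defs.v *)
From HB Require Import structures.
From mathcomp Require Import all_boot all_algebra.
Set Implicit Arguments. Unset Strict Implicit. Unset Printing Implicit Defensive.
Import GRing.Theory.
Local Open Scope ring_scope.

(* The category V_f of finite-dimensional F_p-vector spaces is replaced by its
   skeleton: objects F^n (n : nat), morphisms F^m -> F^n are matrices
   'M['F_p]_(m, n) acting on row vectors (v |-> v *m A); composition of
   A : F^m -> F^n after B : F^k -> F^m is B *m A. *)

(* A presheaf (contravariant functor to Sets): act x A = X(A)(x). *)
Record presheaf (p : nat) := Presheaf {
  pobj :> nat -> Type;
  pact : forall m n, pobj n -> 'M['F_p]_(m, n) -> pobj m;
  pact1 : forall n (x : pobj n), pact x 1%:M = x;
  pactM : forall k m n (x : pobj n) (B : 'M['F_p]_(k, m)) (A : 'M['F_p]_(m, n)),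
      pact x (B *m A) = pact (pact x A) B
}.

Record psh_hom (p : nat) (X Y : presheaf p) := PshHom {
  phom :> forall n, X n -> Y n;
  phom_nat : forall m n (x : X n) (A : 'M['F_p]_(m, n)),
      phom (pact x A) = pact (phom x) A
}.

Definition psh_comp (p : nat) (X Y Z : presheaf p)
  (f : psh_hom Y Z) (g : psh_hom X Y) : forall n, X n -> Z n :=
  fun n x => f n (g n x).

Definition psh_mono (p : nat) (X Y : presheaf p) (f : psh_hom X Y) : Prop :=
  forall (Z : presheaf p) (g h : psh_hom Z X),
    (forall n (z : Z n), f n (g n z) = f n (h n z)) ->
    forall n (z : Z n), g n z = h n z.

Definition rank_le (p : nat) (X : presheaf p) (r k : nat) (y : X k) : Prop :=
  exists (x : X r) (A : 'M['F_p]_(k, r)), y = pact x A.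

(* Regular elements X_reg(n) = X(F^n) \ X_{<= n-1}(F^n), with X_{<= -1} = empty. *)
Definition regular (p : nat) (X : presheaf p) (n : nat) (x : X n) : Prop :=
  match n return X n -> Prop with
  | 0 => fun _ => True
  | n'.+1 => fun x => ~ rank_le n' x
  end x.

(* Main.v *)
Require Import Defs.
From mathcomp Require Import all_boot all_algebra.
From Stdlib Require Import Classical.
Set Implicit Arguments. Unset Strict Implicit. Unset Printing Implicit Defensive.
Import GRing.Theory.
Local Open Scope ring_scope.

Section Aux.
Variable p : nat.

Lemma pad (X : presheaf p) s r k (w : X s) (B : 'M['F_p]_(k,s)) : (s <= r)%N ->
  exists (w' : X r) (B' : 'M['F_p]_(k,r)), pact w B = pact w' B'.
Proof.
move=> Hsr.
exists (pact w (pid_mx s : 'M['F_p]_(r,s))), (B *m (pid_mx s : 'M['F_p]_(s,r))).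
by rewrite -pactM -mulmxA mul_pid_mx minnn (minn_idPr Hsr) pid_mx_1 mulmx1.
Qed.

Lemma notreg (X : presheaf p) s r (w : X s) (B : 'M['F_p]_(r,s)) :
  (s < r)%N -> regular (pact w B) -> False.
Proof.
case: r B => [|r] B //= Hs Hreg.
have [w' [B' E]] := pad w B (Hs : (s <= r)%N).
by apply: Hreg; exists w', B'.
Qed.

Lemma decomp (X : presheaf p) n (x : X n) :
  exists r (z : X r) (A : 'M['F_p]_(n,r)) (S : 'M['F_p]_(r,n)),
    x = pact z A /\ regular z /\ S *m A = 1%:M.
Proof.
suff H : forall r (z : X r) (A : 'M['F_p]_(n,r)), x = pact z A ->
  exists r (z : X r) (A : 'M['F_p]_(n,r)) (S : 'M['F_p]_(r,n)),
    x = pact z A /\ regular z /\ S *m A = 1%:M.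
  by apply: (H n x 1%:M); rewrite pact1.
elim/ltn_ind => r IH z A Hx.
case: (classic (regular z)) => Hz.
  case: (boolP (row_full A)) => HA.
    by move/row_fullP: HA => [S HS]; exists r, z, A, S.
  have lt : (\rank A < r)%N.
    by rewrite ltn_neqAle rank_leq_col andbT; exact: HA.
  apply: (IH _ lt (pact z (row_base A)) (col_base A)).
  by rewrite -pactM mulmx_base.
case: r IH z A Hx Hz => [|s] IH z A Hx Hz; first by exfalso; apply: Hz.
have [w [B Hz']] : rank_le s z by apply: NNPP.
apply: (IH s (ltnSn s) w (A *m B)).
by rewrite pactM -Hz'.
Qed.

Lemma EZ (Y : presheaf p) n r1 r2 (y1 : Y r1) (y2 : Y r2)
  (A1 : 'M['F_p]_(n,r1)) (A2 : 'M['F_p]_(n,r2)) S1 S2 :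
  regular y2 -> S1 *m A1 = 1%:M -> S2 *m A2 = 1%:M ->
  pact y1 A1 = pact y2 A2 -> A1 *m (S1 *m A2) = A2.
Proof.
move=> Hreg HS1 HS2 Hy.
set N0 := (1%:M - A1 *m S1 : 'M['F_p]_n).
have N0A1 : N0 *m A1 = 0 by rewrite mulmxBl mul1mx -mulmxA HS1 mulmx1 subrr.
case: (eqVneq (N0 *m A2) 0) => [H | HR].
  move: H; rewrite mulmxBl mul1mx => /eqP; rewrite subr_eq0 => /eqP E.
  by rewrite mulmxA -E.
exfalso.
set R := N0 *m A2.
set T := pinvmx R.
have RTR : R *m T *m R = R by apply: mulmxKpV; exact: submx_refl.
set E := (1%:M - A2 *m T *m N0 : 'M['F_p]_n).
have EA1 : E *m A1 = A1.
  by rewrite mulmxBl mul1mx -[A2 *m T *m N0 *m A1]mulmxA N0A1 mulmx0 subr0.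
have Hy2 : y2 = pact (pact y1 A1) S2 by rewrite Hy -pactM HS2 pact1.
have Hx : pact (pact y1 A1) E = pact y1 A1 by rewrite -pactM EA1.
set M := S2 *m E *m A2.
have HM : M = 1%:M - T *m R.
  rewrite /M /E mulmxBr mulmx1 !mulmxA HS2 mul1mx mulmxBl HS2.
  by rewrite /R -mulmxA.
have eR : R = N0 *m A2 by [].
clearbody R T.
have Hy2M : y2 = pact y2 M.
  rewrite {1}Hy2 -Hx -[pact (pact _ E) S2]pactM Hy -pactM.
  by [].
have nU : M \notin unitmx.
  apply/negP => U.
  have MP : M *m (T *m R) = 0.
    rewrite HM mulmxBl mul1mx !mulmxA.
    by rewrite -[T *m R *m T]mulmxA -[T *m (R *m T) *m R]mulmxA RTR subrr.
  have P0 : T *m R = 0 by rewrite -(mulKmx U (T *m R)) MP mulmx0.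
  by move/eqP: HR; apply; rewrite -eR -RTR -mulmxA P0 mulmx0.
have lt : (\rank M < r2)%N.
  rewrite ltn_neqAle rank_leq_col andbT.
  by rewrite -row_free_unit in nU.
apply: (@notreg Y _ _ (pact y2 (row_base M)) (col_base M) lt).
by rewrite -pactM mulmx_base -Hy2M.
Qed.

Lemma reg_transfer (X : presheaf p) r r' (z' : X r') (G : 'M['F_p]_(r,r'))
  (G' : 'M['F_p]_(r',r)) : G' *m G = 1%:M -> (r <= r')%N -> regular z' ->
  regular (pact z' G).
Proof.
case: r G G' => [|s] G G' //= HG le Rz [w [B HB]].
apply: (@notreg X _ _ w (G' *m B) le).
by rewrite pactM -HB -pactM HG pact1.
Qed.

Definition repr_psh (n : nat) : presheaf p :=
  @Presheaf p (fun m => 'M['F_p]_(m,n)) (fun m k M A => A *m M)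
    (fun _ M => mul1mx M) (fun _ _ _ M B A => esym (mulmxA B A M)).

Definition repr_hom (X : presheaf p) n (x : X n) : psh_hom (repr_psh n) X :=
  @PshHom p (repr_psh n) X (fun m (M : 'M['F_p]_(m,n)) => pact x M)
    (fun _ _ M A => pactM x A M).

Lemma mono_inj (X Y : presheaf p) (f : psh_hom X Y) :
  psh_mono f <-> (forall n, injective (@phom _ _ _ f n)).
Proof.
split.
  move=> Hm n x x' Hf.
  have := Hm (repr_psh n) (repr_hom x) (repr_hom x') _ n 1%:M.
  rewrite /= !pact1; apply.
  by move=> m z /=; rewrite !phom_nat Hf.
by move=> Hi Z g h H n z; apply: Hi; apply: H.
Qed.

End Aux.

Theorem proposition5p5 (p : nat) (hp : prime p) (X Y : presheaf p)
  (f : psh_hom X Y) :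
  psh_mono f <->
  (forall n : nat,
     (forall x : X n, regular x -> regular (f n x)) /\
     (forall x x' : X n, regular x -> regular x' -> f n x = f n x' -> x = x')).
Proof.
rewrite mono_inj; split.
  move=> Hi n; split; last by move=> x x' _ _; apply: Hi.
  case: n => [|k] x //= Hx [y [A HA]].
  set T := pinvmx A.
  have ATA : A *m T *m A = A by apply: mulmxKpV; exact: submx_refl.
  have E : pact x (A *m T) = x.
    apply: Hi; rewrite phom_nat HA -pactM ATA //.
  by apply: Hx; exists (pact x T), A; rewrite -pactM E.
move=> H2 n x x' Hf.
have [r [z [A [S [Ex [Rz HS]]]]]] := decomp x.
have [r' [z' [A' [S' [Ex' [Rz' HS']]]]]] := decomp x'.
subst x x'.
rewrite !phom_nat in Hf.
have Rfz := (H2 r).1 z Rz.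
have Rfz' := (H2 r').1 z' Rz'.
have E1 := EZ Rfz' HS HS' Hf.
have E2 := EZ Rfz HS' HS (esym Hf).
set G := S *m A'.
set G' := S' *m A.
have GG' : G *m G' = 1%:M by rewrite /G /G' -mulmxA E2 HS.
have G'G : G' *m G = 1%:M by rewrite /G /G' -mulmxA E1 HS'.
have Hfz : f r z = pact (f r' z') G.
  by rewrite /G pactM -Hf -pactM HS pact1.
have le : (r <= r')%N.
  have := mxrankM_maxl G G'; rewrite GG' mxrank1 => h.
  exact: leq_trans h (rank_leq_col G).
have Rg : regular (pact z' G) := reg_transfer G'G le Rz'.
have Hzz : z = pact z' G.
  apply: (H2 r).2 => //.
  by rewrite phom_nat Hfz.
by rewrite Hzz -pactM E1.
Qed.
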